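(* For an arbitrary sequence of instances $\{\mathcal{I}_N\}$ of the binary voting game, let $\Sigma_N$ be a sincere strategy profile in $\mathcal{I}_N$. Then $\lim_{N\to\infty}A(\Sigma_N)=1$ if and only if there is a sequence $\varepsilon_N\to0$ such that for every $N$, $\Sigma_N$ is an $\varepsilon_N$-strong Bayes Nash Equilibrium.
   Context: Binary voting game. An instance has $N$ agents each voting for $\mathbf{A}$ or $\mathbf{R}$. Unobserved world state $W\in\{L,H\}$ with common prior $P_L,P_H>0$. Conditional on $W$, each agent independently receives a signal $S_n\in\{l,h\}$ with $P_{sw}=\Pr[S_n=s\mid W=w]$, $P_{hH}>P_{hL}$, $P_{lH}<P_{lL}$. With threshold $\mu\in(0,1)$, $\mathbf{A}$ wins iff at least $\mu N$ agents vote $\mathbf{A}$, else $\mathbf{R}$ wins. Agent $n$ has utility $v_n:\{L,H\}\times\{\mathbf{A},\mathbf{R}\}\to\{0,\dots,B\}$ ($B$ fixed) with $v_n(H,\mathbf{A})>v_n(L,\mathbf{A})$, $v_n(H,\mathbf{R})<v_n(L,\mathbf{R})$. Every agent is friendly ($v_n(H,\mathbf{A})>v_n(L,\mathbf{A})>v_n(L,\mathbf{R})>v_n(H,\mathbf{R})$), unfriendly ($v_n(L,\mathbf{R})>v_n(H,\mathbf{R})>v_n(H,\mathbf{A})>v_n(L,\mathbf{A})$) or contingent ($v_n(H,\mathbf{A})>v_n(H,\mathbf{R})$, $v_n(L,\mathbf{R})>v_n(L,\mathbf{A})$), with counts $\lfloor\alpha_FN\rfloor$, $\lfloor\alpha_UN\rfloor$,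 rest, for fixed $\alpha$'s summing to 1 with $\alpha_F<\mu$, $\alpha_U<1-\mu$ (informed majority decision: $\mathbf{A}$ in $H$, $\mathbf{R}$ in $L$). A sequence of instances: $\mathcal{I}_N$ has $N$ agents, all share $\mu$, prior, signal distribution, $\alpha$'s; utilities arbitrary. A strategy gives, for each signal, a probability of voting $\mathbf{A}$. Sincere profile: for each agent $n$ and signal $s$, with $u_n(\mathbf{X}\mid s)=\Pr[W=L\mid S_n=s]v_n(L,\mathbf{X})+\Pr[W=H\mid S_n=s]v_n(H,\mathbf{X})$ (posterior by Bayes' rule), agent $n$ on signal $s$ votes $\mathbf{A}$ if $u_n(\mathbf{A}\mid s)>u_n(\mathbf{R}\mid s)$ and $\mathbf{R}$ otherwise. $\lambda^{\mathbf{X}}_w(\Sigma)$: ex-ante probability that $\mathbf{X}$ wins in state $w$. Fidelity $A(\Sigma)=P_L\lambda^{\mathbf{R}}_L(\Sigma)+P_H\lambda^{\mathbf{A}}_H(\Sigma)$. Expected utility $u_n(\Sigma)=\sum_wP_w(\lambda^{\mathbf{A}}_w(\Sigma)v_n(w,\mathbf{A})+\lambda^{\mathbf{R}}_w(\Sigma)v_n(w,\mathbf{R}))$. $\Sigma$ is an $\varepsilon$-strong Bayes Nash Equilibrium if there is no set $D$ of agents and profile $\Sigma'$ with $\sigma'_n=\sigma_n$ for $n\notin D$, $u_n(\Sigma')\ge u_n(\Sigma)$ for all $n\in D$ and $u_n(\Sigma')>u_n(\Sigma)+\varepsilon$ for some $n\in D$. *)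

(* Defs.v *)
From mathcomp Require Import all_boot all_order all_algebra.
From mathcomp Require Import all_classical all_reals all_analysis.
Set Implicit Arguments. Unset Strict Implicit. Unset Printing Implicit Defensive.
Import Order.TTheory GRing.Theory Num.Theory.
Local Open Scope ring_scope.

Inductive state := WL | WH.
Inductive outcome := OA | OR.
Inductive signal := sl | sh.

(* a utility function v : {L,H} x {A,R} -> {0..B} (bound checked separately) *)
Definition util := state -> outcome -> nat.

Section Game.
Variable R : realType.

Definition vR (v : util) w x : R := (v w x)%:R.

Definition friendly (v : util) : Prop :=
  vR v WH OA > vR v WL OA /\ vR v WL OA > vR v WL OR /\ vR v WL OR > vR v WH OR.
Definition unfriendly (v : util) : Prop :=
  vR v WL OR > vR v WH OR /\ vR v WH OR > vR v WH OA /\ vR v WH OA > vR v WL OA.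
Definition contingent (v : util) : Prop :=
  vR v WH OA > vR v WH OR /\ vR v WL OR > vR v WL OA.

(* Standing parameters shared by all instances of the sequence:
   threshold mu, prior PL PH, signal distribution Psig s w = Pr[S=s | W=w],
   type proportions aF aU aC. *)
Definition valid_params (mu PL PH : R) (Psig : signal -> state -> R)
  (aF aU aC : R) : Prop :=
  [/\ 0 < mu < 1, [/\ 0 < PL, 0 < PH & PL + PH = 1],
      (forall s w, 0 <= Psig s w) /\
      (forall w, Psig sl w + Psig sh w = 1),
      Psig sh WH > Psig sh WL /\ Psig sl WH < Psig sl WL &
      [/\ 0 <= aF, 0 <= aU, 0 <= aC, aF + aU + aC = 1 &
          aF < mu /\ aU < 1 - mu]].

Definition valid_instance (B : nat) (aF aU : R) (N : nat) (v : 'I_N -> util)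
  : Prop :=
  [/\ (forall n w x, (v n w x <= B)%N),
      (forall n, vR (v n) WH OA > vR (v n) WL OA /\
                 vR (v n) WH OR < vR (v n) WL OR),
      (forall n, friendly (v n) \/ unfriendly (v n) \/ contingent (v n)),
      (#|[set n | `[< friendly (v n) >]]|%:R : R)
         = (Num.floor (aF * N%:R))%:~R &
      (#|[set n | `[< unfriendly (v n) >]]|%:R : R)
         = (Num.floor (aU * N%:R))%:~R].

Definition prior (PL PH : R) (w : state) : R :=
  match w with WL => PL | WH => PH end.

(* a strategy: for each signal, the probability of voting A *)
Definition strategy := signal -> R.
Definition is_strategy (sg : strategy) : Prop := forall s, 0 <= sg s <= 1.

Definition posterior (PL PH : R) (Psig : signal -> state -> R)
  (s : signal) (w : state) : R :=
  prior PL PH w * Psig s w / (PL * Psig s WL + PH * Psig s WH).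

Definition interim_u (PL PH : R) Psig (v : util) (x : outcome) (s : signal) : R :=
  posterior PL PH Psig s WL * vR v WL x + posterior PL PH Psig s WH * vR v WH x.

Definition is_sincere (PL PH : R) Psig N (v : 'I_N -> util)
  (Sg : 'I_N -> strategy) : Prop :=
  forall n s, Sg n s = if interim_u PL PH Psig (v n) OA s >
                          interim_u PL PH Psig (v n) OR s then 1 else 0.

Definition voteA_prob Psig (sg : strategy) (w : state) : R :=
  Psig sl w * sg sl + Psig sh w * sg sh.

Definition pr_voters Psig N (Sg : 'I_N -> strategy) (w : state)
  (S : {set 'I_N}) : R :=
  \prod_(n in S) voteA_prob Psig (Sg n) w *
  \prod_(n in ~: S) (1 - voteA_prob Psig (Sg n) w).

Definition lambda (mu : R) Psig N (Sg : 'I_N -> strategy) (x : outcome)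
  (w : state) : R :=
  match x with
  | OA => \sum_(S : {set 'I_N} | mu * N%:R <= #|S|%:R) pr_voters Psig Sg w S
  | OR => \sum_(S : {set 'I_N} | #|S|%:R < mu * N%:R) pr_voters Psig Sg w S
  end.

Definition fidelity mu PL PH Psig N (Sg : 'I_N -> strategy) : R :=
  PL * lambda mu Psig Sg OR WL + PH * lambda mu Psig Sg OA WH.

Definition exp_util mu PL PH Psig N (Sg : 'I_N -> strategy) (v : util) : R :=
  \sum_(w <- [:: WL; WH])
     prior PL PH w * (lambda mu Psig Sg OA w * vR v w OA +
                      lambda mu Psig Sg OR w * vR v w OR).

Definition strong_BNE (eps : R) mu PL PH Psig N (v : 'I_N -> util)
  (Sg : 'I_N -> strategy) : Prop :=
  ~ exists (D : {set 'I_N}) (Sg' : 'I_N -> strategy),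
      [/\ (forall n, is_strategy (Sg' n)),
          (forall n s, n \notin D -> Sg' n s = Sg n s),
          (forall n, n \in D ->
             exp_util mu PL PH Psig Sg' (v n) >= exp_util mu PL PH Psig Sg (v n)) &
          (exists2 n, n \in D &
             exp_util mu PL PH Psig Sg' (v n) > exp_util mu PL PH Psig Sg (v n) + eps)].

End Game.

(* Main.v *)
Require Import Defs.
From mathcomp Require Import all_boot all_order all_algebra.
From mathcomp Require Import all_classical all_reals all_analysis.
From mathcomp Require Import ring lra.
Import Order.TTheory GRing.Theory Num.Theory.
Local Open Scope ring_scope.
Set Implicit Arguments. Unset Strict Implicit.

Definition prq (R : realType) N (q : 'I_N -> R) (S : {set 'I_N}) : R :=
  \prod_(n in S) q n * \prod_(n in ~: S) (1 - q n).

Definition Eq (R : realType) N (q : 'I_N -> R) (g : {set 'I_N} -> R) : R :=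
  \sum_S prq q S * g S.

Lemma prq_ifE (R : realType) N (q : 'I_N -> R) S :
  prq q S = \prod_n (if n \in S then q n else 1 - q n).
Proof.
rewrite /prq (bigID (mem S) predT) /=; congr (_ * _).
  by apply: eq_bigr => n ->.
rewrite (eq_bigl (fun n => n \notin S)); last by move=> n; rewrite finset.in_setC.
by apply: eq_bigr => n /negbTE ->.
Qed.

Lemma sum_prod_if (R : realType) N (a b : 'I_N -> R) :
  \sum_(S : {set 'I_N}) \prod_n (if n \in S then a n else b n)
  = \prod_n (a n + b n).
Proof. by rewrite bigA_distr. Qed.

Lemma prq_ge0 (R : realType) N (q : 'I_N -> R) S :
  (forall n, 0 <= q n <= 1) -> 0 <= prq q S.
Proof.
move=> hq; rewrite prq_ifE; apply: prodr_ge0 => n _.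
by case: (n \in S); have /andP[? ?] := hq n; rewrite // subr_ge0.
Qed.

Lemma sum_prq (R : realType) N (q : 'I_N -> R) : \sum_S prq q S = 1.
Proof.
under eq_bigr do rewrite prq_ifE.
by rewrite sum_prod_if; apply: big1 => n _; rewrite addrC subrK.
Qed.

Lemma Eq_sub (R : realType) N (q : 'I_N -> R) (K : {set 'I_N}) :
  Eq q (fun S => (K \subset S)%:R) = \prod_(n in K) q n.
Proof.
rewrite /Eq.
transitivity (\sum_(S : {set 'I_N}) \prod_n
   (if n \in S then q n else if n \in K then 0 else 1 - q n)).
  apply: eq_bigr => S _; rewrite prq_ifE.
  case: (boolP (K \subset S)) => hK.
    rewrite mulr1; apply: eq_bigr => n _.
    case: (boolP (n \in S)) => // nS.
    by rewrite (negbTE (contra (fun h => fintype.subsetP hK n h) nS)).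
  rewrite mulr0; move/fintype.subsetPn: hK => [k kK kS].
  by rewrite (bigD1 k) //= (negbTE kS) kK mul0r.
rewrite sum_prod_if (bigID (mem K)) /=.
rewrite [X in _ * X]big1 ?mulr1; last by move=> n /negbTE ->; rewrite addrC subrK.
by apply: eq_bigr => n ->; rewrite addr0.
Qed.

Lemma card_sumR (R : realType) N (S : {set 'I_N}) :
  (#|S|%:R : R) = \sum_m (([set m] \subset S)%:R : R).
Proof.
rewrite -sum1_card natr_sum big_mkcond /=; apply: eq_bigr => m _.
by rewrite finset.sub1set; case: (m \in S).
Qed.

Lemma Eq_card (R : realType) N (q : 'I_N -> R) :
  \sum_S prq q S * #|S|%:R = \sum_m q m.
Proof.
under eq_bigr do rewrite card_sumR mulr_sumr.
rewrite exchange_big /=; apply: eq_bigr => m _.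
by have := Eq_sub q [set m]; rewrite /Eq big_set1.
Qed.

Lemma Eq_card2 (R : realType) N (q : 'I_N -> R) :
  (forall n, 0 <= q n <= 1) ->
  \sum_S prq q S * (#|S|%:R ^+ 2) <= (\sum_m q m) ^+ 2 + \sum_m q m.
Proof.
move=> hq.
have -> : \sum_S prq q S * (#|S|%:R ^+ 2) =
   \sum_m \sum_k \prod_(n in [set m; k]) q n.
  under eq_bigr => S _.
    rewrite expr2 {1}card_sumR mulr_suml mulr_sumr.
    under eq_bigr => m _ do rewrite card_sumR mulr_sumr mulr_sumr.
    over.
  rewrite exchange_big /=; apply: eq_bigr => m _.
  rewrite exchange_big /=; apply: eq_bigr => k _.
  rewrite -(Eq_sub q [set m; k]) /Eq; apply: eq_bigr => S _.
  congr (_ * _); rewrite -natrM; congr (_%:R).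
  by rewrite finset.subUset !finset.sub1set; case: (m \in S); case: (k \in S).
rewrite expr2 mulr_suml -big_split /=; apply: ler_sum => m _.
rewrite mulr_sumr.
apply: (le_trans (y := \sum_(k : 'I_N) (q m * q k + (if k == m then q m else 0)))).
  apply: ler_sum => k _.
  have /andP[h0 h1] := hq m.
  case: (eqVneq k m) => [->|hk].
    by rewrite finset.setUid big_set1 lerDr mulr_ge0.
  by rewrite addr0 big_setU1 /= ?big_set1 // finset.in_set1 eq_sym.
by rewrite big_split /= -big_mkcond big_pred1_eq.
Qed.

Lemma var_le (R : realType) N (q : 'I_N -> R) :
  (forall n, 0 <= q n <= 1) ->
  \sum_S prq q S * ((#|S|%:R - \sum_m q m) ^+ 2) <= \sum_m q m.
Proof.
move=> hq; set M := \sum_m q m.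
have -> : \sum_S prq q S * ((#|S|%:R - M) ^+ 2) =
  \sum_S prq q S * (#|S|%:R ^+ 2) - (2 * M) * (\sum_S prq q S * #|S|%:R)
  + M ^+ 2 * \sum_S prq q S.
  rewrite [(2 * M) * _]mulr_sumr [M ^+ 2 * _]mulr_sumr -sumrB -big_split /=; apply: eq_bigr => S _; ring.
rewrite Eq_card sum_prq -/M.
have := Eq_card2 hq; rewrite -/M => h.
nra.
Qed.

Lemma cheb (R : realType) N (q : 'I_N -> R) (g : {set 'I_N} -> R) (t : R) :
  (forall n, 0 <= q n <= 1) -> 0 < t ->
  (forall S, g S * t ^+ 2 <= (#|S|%:R - \sum_m q m) ^+ 2) ->
  \sum_S prq q S * g S <= (\sum_m q m) / t ^+ 2.
Proof.
move=> hq t0 hg.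
rewrite ler_pdivlMr ?exprn_gt0 // mulr_suml.
apply: le_trans (var_le hq).
apply: ler_sum => S _; rewrite -mulrA; apply: ler_wpM2l; first exact: prq_ge0.
exact: hg.
Qed.

Definition upd (R : realType) N (q : 'I_N -> R) (m : 'I_N) (c : R) :=
  fun n => if n == m then c else q n.

Lemma prod_split (R : realType) N (F : 'I_N -> R) m :
  \prod_n F n = F m * \prod_(n | n != m) F n.
Proof. by rewrite (bigD1 m). Qed.

Lemma prq_upd (R : realType) N (q : 'I_N -> R) m S :
  prq q S = q m * prq (upd q m 1) S + (1 - q m) * prq (upd q m 0) S.
Proof.
rewrite !prq_ifE !(prod_split _ m).
have E : forall c, \prod_(i | i != m) (if i \in S then upd q m c i
          else 1 - upd q m c i) =
        \prod_(i | i != m) (if i \in S then q i else 1 - q i).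
  by move=> c; apply: eq_bigr => i /negbTE hi; rewrite /upd hi.
rewrite (E 1) (E 0) /upd eqxx; set P := (\prod_(i | i != m) _); case: (m \in S); ring.
Qed.

Lemma Eq_upd (R : realType) N (q : 'I_N -> R) m g :
  Eq q g = q m * Eq (upd q m 1) g + (1 - q m) * Eq (upd q m 0) g.
Proof.
rewrite /Eq !mulr_sumr -big_split /=; apply: eq_bigr => S _.
rewrite (prq_upd q m S); ring.
Qed.

Definition toggle N (m : 'I_N) (S : {set 'I_N}) :=
  if m \in S then S :\ m else m |: S.

Lemma toggleK N (m : 'I_N) : involutive (toggle m).
Proof.
move=> S; rewrite /toggle; case: (boolP (m \in S)) => hm.
  by rewrite !inE eqxx /= finset.setD1K.
by rewrite finset.setU11 finset.setU1K.
Qed.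

Lemma upd_ok (R : realType) N (q : 'I_N -> R) m c :
  (forall n, 0 <= q n <= 1) -> 0 <= c <= 1 -> forall n, 0 <= upd q m c n <= 1.
Proof. by move=> hq hc n; rewrite /upd; case: (n == m). Qed.

Lemma Eq_01 (R : realType) N (q : 'I_N -> R) m (g : {set 'I_N} -> R) :
  (forall n, 0 <= q n <= 1) -> (forall S, 0 <= g S) ->
  (forall S T : {set 'I_N}, S \subset T -> g S <= g T) ->
  Eq (upd q m 0) g <= Eq (upd q m 1) g.
Proof.
move=> hq g0 gm; rewrite /Eq [X in _ <= X](reindex_inj (inv_inj (toggleK m))) /=.
apply: ler_sum => S _; rewrite /toggle.
case: (boolP (m \in S)) => hm.
  rewrite prq_ifE (bigD1 m) //= hm /upd eqxx mul0r mul0r.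
  apply: mulr_ge0 => //; apply: prq_ge0; apply: upd_ok => //; by rewrite ler01 lexx.
have -> : prq (upd q m 1) (m |: S) = prq (upd q m 0) S.
  rewrite !prq_ifE; apply: eq_bigr => n _; rewrite /upd finset.in_setU1.
  case: (eqVneq n m) => [->|_] /=; first by rewrite (negbTE hm) subr0.
  by [].
apply: ler_wpM2l; first by apply: prq_ge0; apply: upd_ok => //; rewrite lexx ler01.
by apply: gm; apply: finset.subsetUr.
Qed.

Lemma Eq_mono1 (R : realType) N (q : 'I_N -> R) m c (g : {set 'I_N} -> R) :
  (forall n, 0 <= q n <= 1) -> (forall S, 0 <= g S) ->
  (forall S T : {set 'I_N}, S \subset T -> g S <= g T) -> c <= 1 -> q m <= c ->
  Eq q g <= Eq (upd q m c) g.
Proof.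
move=> hq g0 gm c1 qc.
have hc : 0 <= c <= 1 by have /andP[h0 _] := hq m; rewrite c1 (le_trans h0 qc).
have uu : forall d, upd (upd q m c) m d = upd q m d.
  by move=> d; apply: funext => n; rewrite /upd; case: (n == m).
have um : upd q m c m = c by rewrite /upd eqxx.
rewrite (Eq_upd q m) (Eq_upd (upd q m c) m) (uu 1) (uu 0) um.
have := Eq_01 m hq g0 gm.
set E1 := Eq (upd q m 1) g; set E0 := Eq (upd q m 0) g => hE.
rewrite -subr_ge0.
have -> : c * E1 + (1 - c) * E0 - (q m * E1 + (1 - q m) * E0) = (c - q m) * (E1 - E0)
  by ring.
by apply: mulr_ge0; rewrite subr_ge0.
Qed.

Lemma Eq_mono (R : realType) N (q q' : 'I_N -> R) (g : {set 'I_N} -> R) :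
  (forall n, 0 <= q n) -> (forall n, q n <= q' n) -> (forall n, q' n <= 1) ->
  (forall S, 0 <= g S) ->
  (forall S T : {set 'I_N}, S \subset T -> g S <= g T) ->
  Eq q g <= Eq q' g.
Proof.
move=> h0 h1 h2 g0 gm.
pose mix j := fun n : 'I_N => if (n < j)%N then q' n else q n.
have mixok : forall j n, 0 <= mix j n <= 1.
  move=> j n; rewrite /mix; case: (n < j)%N.
    by rewrite h2 (le_trans (h0 n) (h1 n)).
  by rewrite h0 (le_trans (h1 n) (h2 n)).
have key : forall j, Eq q g <= Eq (mix j) g.
  elim=> [|j IH].
    by have -> : mix 0%N = q by apply: funext => n; rewrite /mix ltn0.
  case: (ltnP j N) => hj.
    have -> : mix j.+1 = upd (mix j) (Ordinal hj) (q' (Ordinal hj)).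
      apply: funext => n; rewrite /mix /upd ltnS leq_eqVlt.
      case: (eqVneq n (Ordinal hj)) => [->|hn] //=; first by rewrite eqxx.
      have -> : (n == j :> nat) = false.
        by apply/negbTE; apply: contra hn => /eqP e; apply/eqP/val_inj.
      by [].
    apply: le_trans IH _; apply: Eq_mono1 => //.
    by rewrite /mix /= ltnn.
  have -> : mix j.+1 = mix j.
    apply: funext => n; rewrite /mix.
    by rewrite (leq_trans (ltn_ord n) hj) (leq_trans (ltn_ord n) (leqW hj)).
  exact: IH.
have := key N; have -> // : mix N = q'.
by apply: funext => n; rewrite /mix ltn_ord.
Qed.

Definition qv (R : realType) Psig N (Sg : 'I_N -> strategy R) (w : state) :=
  fun n => voteA_prob Psig (Sg n) w.

Definition gA (R : realType) N (mu : R) : {set 'I_N} -> R :=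
  fun S => if mu * N%:R <= #|S|%:R then 1 else 0.

Lemma lamA (R : realType) mu Psig N (Sg : 'I_N -> strategy R) w :
  lambda mu Psig Sg OA w = Eq (qv Psig Sg w) (@gA _ N mu).
Proof.
rewrite /lambda /Eq big_mkcond /=; apply: eq_bigr => S _.
by rewrite /gA; case: ifP => _; rewrite ?mulr1 ?mulr0.
Qed.

Lemma lamR (R : realType) mu Psig N (Sg : 'I_N -> strategy R) w :
  lambda mu Psig Sg OR w = 1 - lambda mu Psig Sg OA w.
Proof.
have h := sum_prq (qv Psig Sg w).
rewrite (bigID (fun S : {set 'I_N} => mu * N%:R <= #|S|%:R)) /= in h.
set A := (\sum_(S | _) _) in h; set B := (\sum_(S | _) _) in h.
have e : A + B - A = B by rewrite addrC addKr.
rewrite h in e; rewrite /lambda -/A e /B; apply: eq_bigl => S; by rewrite ltNge.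
Qed.

Lemma gA_ge0 (R : realType) N (mu : R) S : 0 <= @gA _ N mu S.
Proof. by rewrite /gA; case: ifP. Qed.

Lemma gA_le1 (R : realType) N (mu : R) S : @gA _ N mu S <= 1.
Proof. by rewrite /gA; case: ifP. Qed.

Lemma gA_mono (R : realType) N (mu : R) (S T : {set 'I_N}) : S \subset T -> @gA _ N mu S <= @gA _ N mu T.
Proof.
move=> hST; rewrite /gA; case: ifP => h1; case: ifP => h2 //.
by rewrite (le_trans h1) ?ler_nat ?subset_leq_card in h2.
Qed.

Lemma voteA_ok (R : realType) (Psig : signal -> state -> R) sg w :
  (forall s w, 0 <= Psig s w) -> (forall w, Psig sl w + Psig sh w = 1) ->
  is_strategy sg -> 0 <= voteA_prob Psig sg w <= 1.
Proof.
move=> h0 h1 hs; rewrite /voteA_prob.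
have /andP[a0 a1] := hs sl; have /andP[b0 b1] := hs sh.
have p0 := h0 sl w; have p1 := h0 sh w.
rewrite addr_ge0 ?mulr_ge0 //= -(h1 w) lerD // -[X in _ <= X]mulr1 ler_wpM2l //.
Qed.

Lemma Eq_ge0 (R : realType) N (q : 'I_N -> R) g :
  (forall n, 0 <= q n <= 1) -> (forall S, 0 <= g S) -> 0 <= Eq q g.
Proof. by move=> hq hg; apply: sumr_ge0 => S _; apply: mulr_ge0 => //; exact: prq_ge0. Qed.

Lemma Eq_le1 (R : realType) N (q : 'I_N -> R) g :
  (forall n, 0 <= q n <= 1) -> (forall S, g S <= 1) -> Eq q g <= 1.
Proof.
move=> hq hg; rewrite -(sum_prq q); apply: ler_sum => S _.
by rewrite -[X in _ <= X]mulr1; apply: ler_wpM2l => //; exact: prq_ge0.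
Qed.

Lemma exp_utilE (R : realType) mu PL PH Psig N (Sg : 'I_N -> strategy R) v :
  exp_util mu PL PH Psig Sg v =
  PL * (lambda mu Psig Sg OA WL * vR R v WL OA + (1 - lambda mu Psig Sg OA WL) * vR R v WL OR)
  + PH * (lambda mu Psig Sg OA WH * vR R v WH OA + (1 - lambda mu Psig Sg OA WH) * vR R v WH OR).
Proof. by rewrite /exp_util !big_cons big_nil !lamR /prior addr0. Qed.

Lemma fidelityE (R : realType) mu PL PH Psig N (Sg : 'I_N -> strategy R) :
  fidelity mu PL PH Psig Sg =
  PL * (1 - lambda mu Psig Sg OA WL) + PH * lambda mu Psig Sg OA WH.
Proof. by rewrite /fidelity lamR. Qed.

Lemma natR_lt1 (R : realType) (m n : nat) : (m%:R < n%:R :> R) -> 1 <= n%:R - m%:R :> R.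
Proof.
by rewrite ltr_nat => h; rewrite lerBrDr addrC natr1 ler_nat.
Qed.

Lemma post_props (R : realType) mu PL PH Psig (aF aU aC : R) s :
  valid_params mu PL PH Psig aF aU aC ->
  [/\ 0 <= posterior PL PH Psig s WL, 0 <= posterior PL PH Psig s WH &
      posterior PL PH Psig s WL + posterior PL PH Psig s WH = 1].
Proof.
case=> _ [hPL hPH _] [h0 _] [hh hl] _.
have den : 0 < PL * Psig s WL + PH * Psig s WH.
  case: s.
    have a := h0 sl WL; have b := h0 sl WH.
    have p1 : 0 < PL * Psig sl WL by rewrite mulr_gt0 // (le_lt_trans b hl).
    have p2 : 0 <= PH * Psig sl WH by rewrite mulr_ge0 // ltW.
    lra.
  have a := h0 sh WL; have b := h0 sh WH.
  have p1 : 0 < PH * Psig sh WH by rewrite mulr_gt0 // (le_lt_trans a hh).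
  have p2 : 0 <= PL * Psig sh WL by rewrite mulr_ge0 // ltW.
  lra.
rewrite /posterior /=; split.
- by apply: divr_ge0; [apply: mulr_ge0; [apply: ltW|]|apply: ltW].
- by apply: divr_ge0; [apply: mulr_ge0; [apply: ltW|]|apply: ltW].
- by rewrite -mulrDl divff // gt_eqF.
Qed.

Lemma interim_diff (R : realType) PL PH Psig v s :
  interim_u PL PH Psig v OA s - interim_u PL PH Psig v OR s =
  posterior PL PH Psig s WL * (vR R v WL OA - vR R v WL OR) +
  posterior PL PH Psig s WH * (vR R v WH OA - vR R v WH OR).
Proof. rewrite /interim_u; ring. Qed.

Lemma friendly_A (R : realType) mu PL PH Psig (aF aU aC : R) v s :
  valid_params mu PL PH Psig aF aU aC -> friendly R v ->
  interim_u PL PH Psig v OR s < interim_u PL PH Psig v OA s.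
Proof.
move=> hp [f1 [f2 f3]]; rewrite -subr_gt0 interim_diff.
have [p0 p1 ps] := post_props s hp.
set a := posterior _ _ _ s WL in p0 ps *; set b := posterior _ _ _ s WH in p1 ps *.
have hx : 0 < vR R v WL OA - vR R v WL OR by rewrite subr_gt0.
have hy : 0 < vR R v WH OA - vR R v WH OR by rewrite subr_gt0 (lt_trans f3) // (lt_trans f2).
have [ha|ha] := boolP (0 < a).
  have t1 := mulr_gt0 ha hx; have t2 := mulr_ge0 p1 (ltW hy); lra.
have -> : a = 0 by apply/eqP; rewrite eq_le p0 andbT leNgt.
have -> : b = 1 by move: ps; rewrite (_ : a = 0) ?add0r //; apply/eqP; rewrite eq_le p0 andbT leNgt.
by rewrite mul0r add0r mul1r.
Qed.

Lemma unfriendly_R (R : realType) mu PL PH Psig (aF aU aC : R) v s :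
  valid_params mu PL PH Psig aF aU aC -> unfriendly R v ->
  interim_u PL PH Psig v OA s < interim_u PL PH Psig v OR s.
Proof.
move=> hp [f1 [f2 f3]]; rewrite -subr_lt0 interim_diff.
have [p0 p1 ps] := post_props s hp.
set a := posterior _ _ _ s WL in p0 ps *; set b := posterior _ _ _ s WH in p1 ps *.
have hx : vR R v WL OA - vR R v WL OR < 0 by rewrite subr_lt0 (lt_trans f3) // (lt_trans f2).
have hy : vR R v WH OA - vR R v WH OR < 0 by rewrite subr_lt0.
have [ha|ha] := boolP (0 < a).
  have t1 : a * (vR R v WL OA - vR R v WL OR) < 0 by rewrite pmulr_rlt0.
  have t2 : b * (vR R v WH OA - vR R v WH OR) <= 0 by apply: mulr_ge0_le0 => //; apply: ltW.
  lra.
have a0 : a = 0 by apply/eqP; rewrite eq_le p0 andbT leNgt.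
have -> : b = 1 by move: ps; rewrite a0 add0r.
by rewrite a0 mul0r add0r mul1r.
Qed.

Lemma final_bound (R : realType) (x y d B c e : R) :
  1 <= B -> 0 <= d -> -(B * d) <= x <= B * d -> -(B * d) <= y <= B * d ->
  -B <= c <= B -> -B <= e <= B -> x * c + y * e <= 2 * B ^+ 2 * d.
Proof.
move=> B1 d0 hx hy hc he.
have nx : `|x| <= B * d by rewrite ler_norml.
have ny : `|y| <= B * d by rewrite ler_norml.
have nc : `|c| <= B by rewrite ler_norml.
have ne : `|e| <= B by rewrite ler_norml.
have t1 : x * c <= B * d * B.
  apply: le_trans (ler_norm _) _; rewrite normrM; apply: ler_pM => //.
have t2 : y * e <= B * d * B.
  apply: le_trans (ler_norm _) _; rewrite normrM; apply: ler_pM => //.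
have -> : 2 * B ^+ 2 * d = B * d * B + B * d * B by ring.
exact: lerD.
Qed.

Lemma caseC (R : realType) (x y d B al be : R) :
  1 <= B -> 0 <= d -> -d <= x -> y <= d -> 1 <= al <= B -> 1 <= be <= B ->
  0 <= - x * al + y * be ->
  -(B * d) <= x <= B * d /\ -(B * d) <= y <= B * d.
Proof.
move=> B1 d0 hx hy /andP[a1 aB] /andP[b1 bB] hg.
have Bd : d <= B * d by rewrite -{1}(mul1r d) ler_wpM2r.
have a0 : 0 <= al by apply: le_trans a1; exact: ler01.
have b0 : 0 <= be by apply: le_trans b1; exact: ler01.
have t1 : 0 <= (x + d) * al by apply: mulr_ge0 => //; lra.
have t2 : 0 <= (d - y) * be by apply: mulr_ge0 => //; lra.
have t3 : d * be <= d * B by apply: ler_wpM2l.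
have t3' : d * al <= d * B by apply: ler_wpM2l.
have hxx : x <= B * d.
  have [xp|xn] := ltrP 0 x; last by lra.
  have t4 : 0 <= x * (al - 1) by apply: mulr_ge0; lra.
  lra.
have hyy : -(B * d) <= y.
  have [yn|yp] := ltrP y 0; last by lra.
  have t5 : 0 <= - y * (be - 1) by apply: mulr_ge0; lra.
  lra.
split; apply/andP; split => //; lra.
Qed.

Lemma caseFU (R : realType) (x y af bf au bu : R) :
  0 < af -> af < bf -> 0 < bu -> bu < au ->
  0 <= x * af + y * bf -> 0 <= - x * au - y * bu -> x <= 0 /\ 0 <= y.
Proof.
move=> af0 afb bu0 bua h1 h2.
have bf0 : 0 < bf by apply: lt_trans afb.
have au0 : 0 < au by apply: lt_trans bua.
have k1 : af * bu < bf * au.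
  apply: (lt_trans (y := bf * bu)); first by rewrite ltr_pM2r.
  by rewrite ltr_pM2l.
have e1 : 0 <= x * (af * bu - au * bf).
  have := mulr_ge0 (ltW bu0) h1; have := mulr_ge0 (ltW bf0) h2.
  have -> : x * (af * bu - au * bf) = bf * (- x * au - y * bu) + bu * (x * af + y * bf) - 0 by ring.
  lra.
have e2 : 0 <= y * (bf * au - bu * af).
  have := mulr_ge0 (ltW au0) h1; have := mulr_ge0 (ltW af0) h2.
  have -> : y * (bf * au - bu * af) = af * (- x * au - y * bu) + au * (x * af + y * bf) - 0 by ring.
  lra.
split.
  have kn : af * bu - au * bf < 0 by rewrite subr_lt0 [au * bf]mulrC.
  by move: e1; rewrite mulrC (nmulr_rge0 _ kn).
have kp : 0 < bf * au - bu * af by rewrite subr_gt0 [bu * af]mulrC.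
by move: e2; rewrite mulrC (pmulr_rge0 _ kp).
Qed.

Lemma sincere_strat (R : realType) PL PH Psig N (v : 'I_N -> util) (Sg : 'I_N -> strategy R) :
  is_sincere PL PH Psig v Sg -> forall n, is_strategy (Sg n).
Proof. by move=> hS n s; rewrite hS; case: ifP => _; rewrite ?ler01 ?lexx. Qed.

Lemma vR_bnd (R : realType) B (v : util) w x :
  (forall w x, (v w x <= B)%N) -> 0 <= vR R v w x <= B%:R.
Proof. by move=> h; rewrite /vR ler0n ler_nat h. Qed.

Lemma gainE (R : realType) mu PL PH Psig N (Sg Sg' : 'I_N -> strategy R) v :
  exp_util mu PL PH Psig Sg' v - exp_util mu PL PH Psig Sg v =
  PL * (lambda mu Psig Sg' OA WL - lambda mu Psig Sg OA WL) * (vR R v WL OA - vR R v WL OR)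
  + PH * (lambda mu Psig Sg' OA WH - lambda mu Psig Sg OA WH) * (vR R v WH OA - vR R v WH OR).
Proof. rewrite !exp_utilE; ring. Qed.

Lemma lam_bnd (R : realType) mu PL PH Psig (aF aU aC : R) N (Sg : 'I_N -> strategy R) w :
  valid_params mu PL PH Psig aF aU aC -> (forall n, is_strategy (Sg n)) ->
  0 <= lambda mu Psig Sg OA w <= 1.
Proof.
move=> [_ _ [h0 h1] _ _] hs.
have hq : forall n, 0 <= qv Psig Sg w n <= 1 by move=> n; apply: voteA_ok.
by rewrite lamA Eq_ge0 ?Eq_le1 // => S; [apply: gA_le1|apply: gA_ge0].
Qed.

Lemma sinc_F (R : realType) mu PL PH Psig (aF aU aC : R) N (v : 'I_N -> util)
  (Sg : 'I_N -> strategy R) n s :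
  valid_params mu PL PH Psig aF aU aC -> is_sincere PL PH Psig v Sg ->
  friendly R (v n) -> Sg n s = 1.
Proof. by move=> hp hS hF; rewrite hS ifT //; apply: friendly_A hp hF. Qed.

Lemma sinc_U (R : realType) mu PL PH Psig (aF aU aC : R) N (v : 'I_N -> util)
  (Sg : 'I_N -> strategy R) n s :
  valid_params mu PL PH Psig aF aU aC -> is_sincere PL PH Psig v Sg ->
  unfriendly R (v n) -> Sg n s = 0.
Proof.
move=> hp hS hU; rewrite hS ifF //; apply/negbTE; rewrite -leNgt; apply: ltW.
exact: unfriendly_R hp hU.
Qed.

Lemma dir1_N (R : realType) mu PL PH Psig (aF aU aC : R) B
  (hpar : valid_params mu PL PH Psig aF aU aC) N (v : 'I_N -> util)
  (hv : valid_instance B aF aU v) (Sg : 'I_N -> strategy R)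
  (hS : is_sincere PL PH Psig v Sg) :
  strong_BNE (2 * B%:R ^+ 2 * (1 - fidelity mu PL PH Psig Sg)) mu PL PH Psig v Sg.
Proof.
move=> [D [Sg' [hstr hsame hweak [n0 n0D hgain]]]].
have hpar' := hpar.
case: hpar' => _ [hPL hPH hP1] [h0 h1] _ _.
case: hv => hB hord htype _ _.
have hstS := sincere_strat hS.
have gain : forall n, exp_util mu PL PH Psig Sg' (v n) - exp_util mu PL PH Psig Sg (v n) =
  PL * (lambda mu Psig Sg' OA WL - lambda mu Psig Sg OA WL) * (vR R (v n) WL OA - vR R (v n) WL OR)
  + PH * (lambda mu Psig Sg' OA WH - lambda mu Psig Sg OA WH) * (vR R (v n) WH OA - vR R (v n) WH OR).
  by move=> n; rewrite gainE.
have /andP[aL0 aL1] := @lam_bnd R mu PL PH Psig aF aU aC N Sg WL hpar hstS.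
have /andP[aH0 aH1] := @lam_bnd R mu PL PH Psig aF aU aC N Sg WH hpar hstS.
have /andP[bL0 bL1] := @lam_bnd R mu PL PH Psig aF aU aC N Sg' WL hpar hstr.
have /andP[bH0 bH1] := @lam_bnd R mu PL PH Psig aF aU aC N Sg' WH hpar hstr.
have monoF : (forall n, n \in D -> friendly R (v n)) ->
    lambda mu Psig Sg' OA WL <= lambda mu Psig Sg OA WL.
  move=> hDF; rewrite !lamA; apply: Eq_mono.
  - by move=> n; have /andP[] := voteA_ok WL h0 h1 (hstr n).
  - move=> n; case: (boolP (n \in D)) => hn.
      rewrite {2}/qv /voteA_prob (@sinc_F R mu PL PH Psig aF aU aC N v Sg n sl hpar hS (hDF n hn)) (@sinc_F R mu PL PH Psig aF aU aC N v Sg n sh hpar hS (hDF n hn)) !mulr1 h1.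
      by have /andP[] := voteA_ok WL h0 h1 (hstr n).
    by rewrite /qv /voteA_prob !hsame.
  - by move=> n; have /andP[] := voteA_ok WL h0 h1 (hstS n).
  - exact: gA_ge0.
  - exact: gA_mono.
have monoU : (forall n, n \in D -> unfriendly R (v n)) ->
    lambda mu Psig Sg OA WH <= lambda mu Psig Sg' OA WH.
  move=> hDU; rewrite !lamA; apply: Eq_mono.
  - by move=> n; have /andP[] := voteA_ok WH h0 h1 (hstS n).
  - move=> n; case: (boolP (n \in D)) => hn.
      rewrite {1}/qv /voteA_prob (@sinc_U R mu PL PH Psig aF aU aC N v Sg n sl hpar hS (hDU n hn)) (@sinc_U R mu PL PH Psig aF aU aC N v Sg n sh hpar hS (hDU n hn)) !mulr0 addr0.
      by have /andP[] := voteA_ok WH h0 h1 (hstr n).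
    by rewrite /qv /voteA_prob !hsame.
  - by move=> n; have /andP[] := voteA_ok WH h0 h1 (hstr n).
  - exact: gA_ge0.
  - exact: gA_mono.
have hg0 := hgain; rewrite -ltrBrDl gain fidelityE in hg0.
have hw : forall n, n \in D -> 0 <= PL * (lambda mu Psig Sg' OA WL - lambda mu Psig Sg OA WL) *
  (vR R (v n) WL OA - vR R (v n) WL OR)
  + PH * (lambda mu Psig Sg' OA WH - lambda mu Psig Sg OA WH) * (vR R (v n) WH OA - vR R (v n) WH OR).
  by move=> n hn; rewrite -gain subr_ge0; apply: hweak.
move: monoF monoU hg0 hw.
move: (lambda mu Psig Sg OA WL) (lambda mu Psig Sg OA WH)
  (lambda mu Psig Sg' OA WL) (lambda mu Psig Sg' OA WH) aL0 aL1 aH0 aH1 bL0 bL1 bH0 bH1.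
move=> aL aH bL bH aL0 aL1 aH0 aH1 bL0 bL1 bH0 bH1 monoF monoU hg0 hw.
clear gain hgain hweak.
set d := 1 - (PL * (1 - aL) + PH * aH) in hg0.
have dE : d = PL * aL + PH * (1 - aH) by rewrite /d; lra.
set x := PL * (bL - aL) in hg0 hw; set y := PH * (bH - aH) in hg0 hw.
have p1 : 0 <= PL * aL by apply: mulr_ge0 => //; apply: ltW.
have p2 : 0 <= PH * (1 - aH) by apply: mulr_ge0; [apply: ltW|lra].
have p3 : 0 <= PL * bL by apply: mulr_ge0 => //; apply: ltW.
have p4 : 0 <= PH * (1 - bH) by apply: mulr_ge0; [apply: ltW|lra].
have d0 : 0 <= d by lra.
have hx : -d <= x by rewrite /x; lra.
have hy : y <= d by rewrite /y; lra.
have vb : forall n w o, 0 <= vR R (v n) w o <= B%:R by move=> n w o; apply: vR_bnd.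
have B1 : 1 <= (B%:R : R).
  have := natR_lt1 (hord n0).1.
  have /andP[? ?] := vb n0 WL OA; have /andP[? ?] := vb n0 WH OA; lra.
have Bd : d <= B%:R * d by rewrite -{1}(mul1r d) ler_wpM2r.
have BdB : d * B%:R <= 2 * B%:R ^+ 2 * d.
  have : 0 <= (d * B%:R) * (2 * B%:R - 1) by apply: mulr_ge0; [apply: mulr_ge0|]; lra.
  lra.
set c0 := vR R (v n0) WL OA - vR R (v n0) WL OR in hg0.
set e0 := vR R (v n0) WH OA - vR R (v n0) WH OR in hg0.
have hc0 : - B%:R <= c0 <= B%:R.
  have /andP[? ?] := vb n0 WL OA; have /andP[? ?] := vb n0 WL OR; apply/andP; split; rewrite /c0; lra.
have he0 : - B%:R <= e0 <= B%:R.
  have /andP[? ?] := vb n0 WH OA; have /andP[? ?] := vb n0 WH OR; apply/andP; split; rewrite /e0; lra.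
suff hfin : x * c0 + y * e0 <= 2 * B%:R ^+ 2 * d by lra.
have [[c cD cC]|hC] := pselect (exists2 n, n \in D & contingent R (v n)).
  have wc := hw c cD.
  case: cC => c1 c2.
  have al1 := natR_lt1 c2; have be1 := natR_lt1 c1.
  have /andP[? ?] := vb c WL OA; have /andP[? ?] := vb c WL OR.
  have /andP[? ?] := vb c WH OA; have /andP[? ?] := vb c WH OR.
  have [hxb hyb] := @caseC R x y d B%:R (vR R (v c) WL OR - vR R (v c) WL OA)
     (vR R (v c) WH OA - vR R (v c) WH OR) B1 d0 hx hy
     (ltac:(apply/andP; split; lra)) (ltac:(apply/andP; split; lra)) (ltac:(lra)).
  exact: final_bound.
have [[[f fD fF] [u uD uU]]|hFU] := pselect ((exists2 n, n \in D & friendly R (v n)) /\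
    (exists2 n, n \in D & unfriendly R (v n))).
  have wf := hw f fD; have wu := hw u uD.
  case: fF => f1 [f2 f3]; case: uU => u1 [u2 u3].
  have [xn yp] := @caseFU R x y (vR R (v f) WL OA - vR R (v f) WL OR)
     (vR R (v f) WH OA - vR R (v f) WH OR) (vR R (v u) WL OR - vR R (v u) WL OA)
     (vR R (v u) WH OR - vR R (v u) WH OA)
     (ltac:(lra)) (ltac:(lra)) (ltac:(lra)) (ltac:(lra)) (ltac:(lra)) (ltac:(lra)).
  apply: final_bound => //; apply/andP; split; lra.
case: (htype n0) => [n0F|[n0U|n0C]]; last by exfalso; apply: hC; exists n0.
  have hDF : forall n, n \in D -> friendly R (v n).
    move=> n hn; case: (htype n) => [//|[nU|nC]]; exfalso.
      by apply: hFU; split; [exists n0|exists n].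
    by apply: hC; exists n.
  have xn : x <= 0 by rewrite /x; apply: mulr_ge0_le0; [apply: ltW|have := monoF hDF; lra].
  case: n0F => f1 [f2 f3].
  have t1 : x * c0 <= 0 by apply: mulr_le0_ge0 => //; rewrite /c0; lra.
  have e00 : 0 <= e0 by rewrite /e0; lra.
  have t2 : y * e0 <= d * e0 by apply: ler_wpM2r.
  have t3 : d * e0 <= d * B%:R by apply: ler_wpM2l => //; case/andP: he0.
  lra.
have hDU : forall n, n \in D -> unfriendly R (v n).
  move=> n hn; case: (htype n) => [nF|[//|nC]]; exfalso.
    by apply: hFU; split; [exists n|exists n0].
  by apply: hC; exists n.
have yp : 0 <= y by rewrite /y; apply: mulr_ge0; [apply: ltW|have := monoU hDU; lra].
case: n0U => u1 [u2 u3].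
have c00 : c0 <= 0 by rewrite /c0; lra.
have t1 : (x + d) * c0 <= 0 by apply: mulr_ge0_le0 => //; lra.
have t2 : d * (- c0) <= d * B%:R by apply: ler_wpM2l => //; case/andP: hc0 => ? ?; lra.
have t3 : y * e0 <= 0 by apply: mulr_ge0_le0 => //; rewrite /e0; lra.
lra.
Qed.

Lemma card_sum_in (R : realType) N (A : {set 'I_N}) :
  (#|A|%:R : R) = \sum_n ((n \in A)%:R : R).
Proof. by rewrite card_sumR; apply: eq_bigr => n _; rewrite finset.sub1set. Qed.

Lemma F_notU (R : realType) v : friendly R v -> ~ unfriendly R v.
Proof. by move=> [f1 [f2 f3]] [u1 [u2 u3]]; lra. Qed.
Lemma F_notC (R : realType) v : friendly R v -> ~ contingent R v.
Proof. by move=> [f1 [f2 f3]] [u1 u2]; lra. Qed.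
Lemma U_notC (R : realType) v : unfriendly R v -> ~ contingent R v.
Proof. by move=> [f1 [f2 f3]] [u1 u2]; lra. Qed.

Lemma mean_L (R : realType) (N cF cU p aF aU mu kap : R) :
  cF <= aF * N -> aU * N - 1 <= cU -> 0 <= p <= 1 ->
  aF + (1 - aF - aU) * p = mu - 2 * kap -> 1 <= kap * N ->
  (N - cF - cU) * p + cF <= (mu - kap) * N.
Proof.
move=> h1 h2 /andP[p0 p1] he hk.
have t1 : 0 <= (aF * N - cF) * (1 - p) by apply: mulr_ge0; lra.
have t2 : 0 <= (cU - (aU * N - 1)) * p by apply: mulr_ge0; lra.
have t3 := congr1 (fun z => N * z) he; simpl in t3.
lra.
Qed.

Lemma mean_H (R : realType) (N cF cU p aF aU mu kap : R) :
  aF * N - 1 <= cF -> cU <= aU * N -> 0 <= p <= 1 ->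
  aF + (1 - aF - aU) * p = mu + 2 * kap -> 1 <= kap * N ->
  (mu + kap) * N <= (N - cF - cU) * p + cF.
Proof.
move=> h1 h2 /andP[p0 p1] he hk.
have t1 : 0 <= (cF - (aF * N - 1)) * (1 - p) by apply: mulr_ge0; lra.
have t2 : 0 <= (aU * N - cU) * p by apply: mulr_ge0; lra.
have t3 := congr1 (fun z => N * z) he; simpl in t3.
lra.
Qed.

Lemma gain_lb (R : realType) (PL PH aL aH bL bH al be B : R) :
  0 <= PL -> 0 <= PH -> 0 <= aL -> aH <= 1 -> 0 <= bL -> bH <= 1 ->
  1 <= al <= B -> 1 <= be <= B ->
  (PL * aL + PH * (1 - aH)) - B * (PL * bL + PH * (1 - bH)) <=
  PL * (bL - aL) * (- al) + PH * (bH - aH) * be.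
Proof.
move=> hPL hPH aL0 aH1 bL0 bH1 /andP[a1 aB] /andP[b1 bB].
have t1 : 0 <= PL * aL * (al - 1) by rewrite !mulr_ge0 // subr_ge0.
have t2 : 0 <= PL * bL * (B - al) by rewrite !mulr_ge0 // subr_ge0.
have t3 : 0 <= PH * (1 - aH) * (be - 1) by rewrite !mulr_ge0 // subr_ge0.
have t4 : 0 <= PH * (1 - bH) * (B - be) by rewrite !mulr_ge0 // subr_ge0.
lra.
Qed.

Lemma Eq_compl (R : realType) N (q : 'I_N -> R) g :
  1 - Eq q g = Eq q (fun S => 1 - g S).
Proof.
have e := sum_prq q.
rewrite /Eq; under [in RHS]eq_bigr do rewrite mulrBr mulr1.
by rewrite sumrB e.
Qed.

Lemma sq_le (R : realType) (a b : R) : 0 <= b -> b <= a -> b ^+ 2 <= a ^+ 2.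
Proof.
move=> b0 ba; have : 0 <= (a - b) * (a + b) by apply: mulr_ge0; lra.
rewrite !expr2; lra.
Qed.

Definition tpar (R : realType) (mu aF aC : R) := (mu - aF) / aC.
Definition kpar (R : realType) (mu aF aC : R) (Psig : signal -> state -> R) :=
  aC * (tpar mu aF aC * (1 - tpar mu aF aC)) * (Psig sh WH - Psig sh WL) / 4.

Lemma tpar_props (R : realType) mu PL PH Psig (aF aU aC : R) :
  valid_params mu PL PH Psig aF aU aC ->
  [/\ 0 < aC, aC * tpar mu aF aC = mu - aF, 0 < tpar mu aF aC & tpar mu aF aC < 1].
Proof.
case=> _ _ _ _ [haF haU haC hsum [hF hU]].
have aC0 : 0 < aC by lra.
split => //.
- by rewrite /tpar mulrC divfK // gt_eqF.
- by rewrite /tpar divr_gt0 //; lra.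
- by rewrite /tpar ltr_pdivrMr // mul1r; lra.
Qed.

Lemma kpar_pos (R : realType) mu PL PH Psig (aF aU aC : R) :
  valid_params mu PL PH Psig aF aU aC -> 0 < kpar mu aF aC Psig.
Proof.
move=> hp; have [aC0 _ t0 t1] := tpar_props hp.
case: hp => _ _ _ [hh _] _.
rewrite /kpar; apply: divr_gt0; last by [].
apply: mulr_gt0; last by rewrite subr_gt0.
by apply: mulr_gt0 => //; apply: mulr_gt0 => //; rewrite subr_gt0.
Qed.

Lemma dir2_N (R : realType) mu PL PH Psig (aF aU aC : R) B
  (hpar : valid_params mu PL PH Psig aF aU aC) N (v : 'I_N -> util)
  (hv : valid_instance B aF aU v) (Sg : 'I_N -> strategy R)
  (hS : is_sincere PL PH Psig v Sg) (eta eps : R) :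
  0 < eta -> eps < eta / 2 -> 1 <= kpar mu aF aC Psig * N%:R ->
  B%:R <= eta / 2 * (kpar mu aF aC Psig ^+ 2 * N%:R) ->
  strong_BNE eps mu PL PH Psig v Sg -> 1 - fidelity mu PL PH Psig Sg < eta.
Proof.
move=> eta0 heps hk1 hkB hBNE.
rewrite ltNge; apply/negP => hd; apply: hBNE.
have [aC0 tE t0 t1] := tpar_props hpar.
have kap0 := kpar_pos hpar.
have hpar' := hpar.
case: hpar' => hmu [hPL hPH hP1] [h0 h1] [hh hl] [haF haU haC hsum [hFmu hUmu]].
case: hv => hB hord htype hcF hcU.
set kap := kpar mu aF aC Psig in hk1 hkB kap0.
have kapE : kap = aC * (tpar mu aF aC * (1 - tpar mu aF aC)) * (Psig sh WH - Psig sh WL) / 4 by [].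
clearbody kap.
set t := tpar mu aF aC in tE t0 t1 kapE; clearbody t.
set d := t * (1 - t) in kapE.
have d0 : 0 < d by rewrite /d mulr_gt0 // subr_gt0.
have dt : d <= t by have := mulr_ge0 (ltW t0) (ltW t0); rewrite /d; lra.
have dt' : d <= 1 - t.
  have : 0 <= (1 - t) * (1 - t) by apply: mulr_ge0; lra.
  rewrite /d; lra.
clearbody d.
have hsh : forall w, 0 <= Psig sh w <= 1.
  by move=> w; have := h0 sh w; have := h0 sl w; have := h1 w; move=> ? ? ?; apply/andP; split; lra.
set m := (Psig sh WL + Psig sh WH) / 2.
have mE : m = (Psig sh WL + Psig sh WH) / 2 by [].
have m0 : 0 <= m <= 1.
  have /andP[? ?] := hsh WL; have /andP[? ?] := hsh WH.
  by apply/andP; split; rewrite /m; lra.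
clearbody m.
set be := t - d * m.
have dm : d * m <= d.
  have : 0 <= d * (1 - m) by apply: mulr_ge0; [apply: ltW|case/andP: m0 => ? ?; lra].
  lra.
have dm0 : 0 <= d * m by apply: mulr_ge0; [apply: ltW|case/andP: m0].
set al := be + d.
have be01 : 0 <= be <= 1 by apply/andP; split; rewrite /be; lra.
have al01 : 0 <= al <= 1 by apply/andP; split; rewrite /al /be; lra.
pose sgC : strategy R := fun s => if s is sh then al else be.
have vC : forall w, voteA_prob Psig sgC w = be + d * Psig sh w.
  move=> w; rewrite /voteA_prob /sgC /al.
  have e : Psig sl w = 1 - Psig sh w by rewrite -(h1 w) addrK.
  rewrite e; ring.
set Fs := [set n | `[< friendly R (v n) >]] in hcF.
set Us := [set n | `[< unfriendly R (v n) >]] in hcU.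
pose Cs := [set n : 'I_N | `[< contingent R (v n) >]].
have ind : forall n, ((n \in Fs)%:R + (n \in Us)%:R + (n \in Cs)%:R : R) = 1.
  move=> n; rewrite !finset.in_set; case: (htype n) => [h|[h|h]].
  - by rewrite (asboolT h) (asboolF (F_notU h)) (asboolF (F_notC h)) /= mulr1n !addr0.
  - by rewrite (asboolF (fun f => F_notU f h)) (asboolT h) (asboolF (U_notC h)) /= mulr1n addr0 add0r.
  - by rewrite (asboolF (fun f => F_notC f h)) (asboolF (fun u => U_notC u h)) (asboolT h) /= mulr1n !add0r.
have hcard : (#|Fs|%:R + #|Us|%:R + #|Cs|%:R : R) = N%:R.
  have e : \sum_(n : 'I_N) ((n \in Fs)%:R + (n \in Us)%:R + (n \in Cs)%:R : R) = N%:R.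
    by rewrite (eq_bigr (fun _ => 1)) // sumr_const card_ord.
  by rewrite !big_split /= -!card_sum_in in e.
pose Sg' := fun n => if n \in Cs then sgC else Sg n.
have hq' : forall w n, voteA_prob Psig (Sg' n) w =
    (n \in Cs)%:R * (be + d * Psig sh w) + (n \in Fs)%:R.
  move=> w n; rewrite /Sg' !finset.in_set; case: (htype n) => [h|[h|h]].
  - rewrite (asboolT h) (asboolF (F_notC h)) /= mul0r add0r mulr1n.
    rewrite /voteA_prob (@sinc_F R mu PL PH Psig aF aU aC N v Sg n sl hpar hS h).
    by rewrite (@sinc_F R mu PL PH Psig aF aU aC N v Sg n sh hpar hS h) !mulr1 h1.
  - rewrite (asboolF (U_notC h)) (asboolF (fun f => F_notU f h)) /= mul0r add0r.
    rewrite /voteA_prob (@sinc_U R mu PL PH Psig aF aU aC N v Sg n sl hpar hS h).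
    by rewrite (@sinc_U R mu PL PH Psig aF aU aC N v Sg n sh hpar hS h) !mulr0 addr0.
  - rewrite (asboolT h) (asboolF (fun f => F_notC f h)) /= mul1r addr0.
    exact: vC.
have hM : forall w, \sum_n voteA_prob Psig (Sg' n) w =
    #|Cs|%:R * (be + d * Psig sh w) + #|Fs|%:R.
  move=> w; rewrite (eq_bigr _ (fun n _ => hq' w n)) big_split /= -mulr_suml.
  by rewrite -!card_sum_in.
have hF1 : #|Fs|%:R <= aF * N%:R by rewrite hcF floor_le.
have hF2 : aF * N%:R - 1 <= #|Fs|%:R.
  rewrite hcF; have := floorD1_gt (aF * N%:R); rewrite intrD /= => ?; lra.
have hU1 : #|Us|%:R <= aU * N%:R by rewrite hcU floor_le.
have hU2 : aU * N%:R - 1 <= #|Us|%:R.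
  rewrite hcU; have := floorD1_gt (aU * N%:R); rewrite intrD /= => ?; lra.
have hCe : (#|Cs|%:R : R) = N%:R - #|Fs|%:R - #|Us|%:R by lra.
have aCe : aC = 1 - aF - aU by lra.
have hsgC : is_strategy sgC by case; rewrite /sgC.
have hstr' : forall n, is_strategy (Sg' n).
  by move=> n; rewrite /Sg'; case: ifP => _ //; exact: (sincere_strat hS n).
have hqok : forall w n, 0 <= qv Psig Sg' w n <= 1.
  by move=> w n; apply: voteA_ok.
have pLok : 0 <= be + d * Psig sh WL <= 1 by rewrite -vC; apply: voteA_ok.
have pHok : 0 <= be + d * Psig sh WH <= 1 by rewrite -vC; apply: voteA_ok.
have idL : aF + (1 - aF - aU) * (be + d * Psig sh WL) = mu - 2 * kap.
  rewrite -aCe kapE /be mE; lra.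
have idH : aF + (1 - aF - aU) * (be + d * Psig sh WH) = mu + 2 * kap.
  rewrite -aCe kapE /be mE; lra.
have ML := mean_L hF1 hU2 pLok idL hk1.
have MH := mean_H hF2 hU1 pHok idH hk1.
rewrite -hCe in ML MH; rewrite -(hM WL) in ML; rewrite -(hM WH) in MH.
have kN0 : 0 < kap * N%:R by lra.
set T := (kap * N%:R) ^+ 2.
have T0 : 0 < T by rewrite /T exprn_gt0.
have Nq : forall w, \sum_n voteA_prob Psig (Sg' n) w <= N%:R.
  move=> w; apply: (le_trans (y := \sum_(n : 'I_N) (1 : R))).
    by apply: ler_sum => n _; have /andP[] := hqok w n.
  by rewrite sumr_const card_ord.
have lL : lambda mu Psig Sg' OA WL <= N%:R / T.
  rewrite lamA.
  have hg : forall S : {set 'I_N}, gA mu S * (kap * N%:R) ^+ 2 <=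
      (#|S|%:R - \sum_m qv Psig Sg' WL m) ^+ 2.
    move=> S; rewrite /gA /qv /=; case: ifP => hS'.
      by rewrite mul1r; apply: sq_le; lra.
    by rewrite mul0r sqr_ge0.
  apply: le_trans (cheb (hqok WL) kN0 hg) _.
  by apply: ler_wpM2r; [rewrite invr_ge0 ltW|exact: Nq].
have lH : 1 - lambda mu Psig Sg' OA WH <= N%:R / T.
  rewrite lamA Eq_compl.
  have hg : forall S : {set 'I_N}, (1 - gA mu S) * (kap * N%:R) ^+ 2 <=
      (#|S|%:R - \sum_m qv Psig Sg' WH m) ^+ 2.
    move=> S; rewrite /gA /qv /=; case: ifP => hS'.
      by rewrite subrr mul0r sqr_ge0.
    rewrite subr0 mul1r.
    rewrite (_ : (#|S|%:R - _) ^+ 2 = (\sum_m voteA_prob Psig (Sg' m) WH - #|S|%:R) ^+ 2);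
      last by ring.
    apply: sq_le; first lra.
    move/negbT: hS'; rewrite -ltNge => hS'; lra.
  apply: le_trans (cheb (hqok WH) kN0 hg) _.
  by apply: ler_wpM2r; [rewrite invr_ge0 ltW|exact: Nq].
have BNT : B%:R * (N%:R / T) <= eta / 2.
  rewrite mulrA ler_pdivrMr //.
  have := ler_wpM2r (ler0n R N) hkB.
  rewrite /T exprMn; lra.
have hstS := sincere_strat hS.
have /andP[aL0 aL1] := @lam_bnd R mu PL PH Psig aF aU aC N Sg WL hpar hstS.
have /andP[aH0 aH1] := @lam_bnd R mu PL PH Psig aF aU aC N Sg WH hpar hstS.
have /andP[bL0 bL1] := @lam_bnd R mu PL PH Psig aF aU aC N Sg' WL hpar hstr'.
have /andP[bH0 bH1] := @lam_bnd R mu PL PH Psig aF aU aC N Sg' WH hpar hstr'.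
have dlt : PL * lambda mu Psig Sg' OA WL + PH * (1 - lambda mu Psig Sg' OA WH) <= N%:R / T.
  have := ler_wpM2l (ltW hPL) lL; have := ler_wpM2l (ltW hPH) lH.
  have := congr1 (fun z => z * (N%:R / T)) hP1; simpl; lra.
have hdel : eta <= PL * lambda mu Psig Sg OA WL + PH * (1 - lambda mu Psig Sg OA WH).
  by move: hd; rewrite fidelityE; lra.
have hgain : forall n, n \in Cs ->
    eta / 2 <= exp_util mu PL PH Psig Sg' (v n) - exp_util mu PL PH Psig Sg (v n).
  move=> n; rewrite finset.in_set => /asboolP [c1 c2].
  rewrite gainE.
  have := natR_lt1 c1; have := natR_lt1 c2.
  have /andP[? ?] := @vR_bnd R B (v n) WL OA (hB n); have /andP[? ?] := @vR_bnd R B (v n) WL OR (hB n).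
  have /andP[? ?] := @vR_bnd R B (v n) WH OA (hB n); have /andP[? ?] := @vR_bnd R B (v n) WH OR (hB n).
  move=> ha hb.
  have := @gain_lb R PL PH (lambda mu Psig Sg OA WL) (lambda mu Psig Sg OA WH)
    (lambda mu Psig Sg' OA WL) (lambda mu Psig Sg' OA WH)
    (vR R (v n) WL OR - vR R (v n) WL OA) (vR R (v n) WH OA - vR R (v n) WH OR) B%:R
    (ltW hPL) (ltW hPH) aL0 aH1 bL0 bH1
    (ltac:(apply/andP; split; lra)) (ltac:(apply/andP; split; lra)).
  have := ler_wpM2l (ler0n R B) dlt.
  lra.
exists Cs, Sg'; split.
- exact: hstr'.
- by move=> n s hn; rewrite /Sg' (negbTE hn).
- by move=> n hn; have := hgain n hn; lra.
have N0 : (0 : R) < N%:R by move: kN0; rewrite pmulr_rgt0.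
have cpos : (0 : R) < #|Cs|%:R.
  have := mulr_gt0 aC0 N0; have := congr1 (fun z => z * N%:R) aCe; simpl; lra.
move: cpos; rewrite ltr0n card_gt0 => /finset.set0Pn [n hn].
by exists n => //; have := hgain n hn; lra.
Qed.

Unset Implicit Arguments.
Import numFieldNormedType.Exports.
Local Open Scope classical_set_scope.

Lemma fid_le1 (R : realType) mu PL PH Psig (aF aU aC : R) N (Sg : 'I_N -> strategy R) :
  valid_params mu PL PH Psig aF aU aC -> (forall n, is_strategy (Sg n)) ->
  (fidelity mu PL PH Psig Sg <= 1)%R.
Proof.
move=> hp hs; have hp' := hp; case: hp' => _ [hPL hPH hP1] _ _ _.
have /andP[a0 a1] := @lam_bnd R mu PL PH Psig aF aU aC N Sg WL hp hs.
have /andP[b0 b1] := @lam_bnd R mu PL PH Psig aF aU aC N Sg WH hp hs.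
rewrite fidelityE.
have := mulr_ge0 (ltW hPL) a0; have := mulr_ge0 (ltW hPH) (ltac:(lra) : (0 <= 1 - lambda mu Psig Sg OA WH)%R).
lra.
Qed.

Lemma scale_cvg0 (R : realType) (f : nat -> R) (K : R) :
  (0 <= K)%R -> (f N @[N --> \oo] --> (1 : R)) ->
  ((K * (1 - f N))%R @[N --> \oo] --> (0 : R)).
Proof.
move=> K0 hf; apply/cvgrPdist_lt => e e0.
have c0 : (0 < K + 1)%R by lra.
have he := (cvgrPdist_lt _ _).1 hf (e / (K + 1))%R (divr_gt0 e0 c0).
near=> N.
have hN : (`|1 - f N| < e / (K + 1))%R by near: N; exact: he.
rewrite sub0r normrN normrM (ger0_norm K0).
rewrite ltr_pdivlMr // in hN.
have hn0 := normr_ge0 (1 - f N)%R.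
set z := `|_| in hN hn0 *.
have := mulr_ge0 K0 hn0; lra.
Unshelve. all: by end_near.
Qed.

Theorem corollary4 (R : realType) (mu PL PH : R) (Psig : signal -> state -> R)
  (aF aU aC : R) (B : nat)
  (hpar : valid_params mu PL PH Psig aF aU aC)
  (v : forall N : nat, 'I_N -> util)
  (hv : forall N, valid_instance B aF aU (v N))
  (Sg : forall N : nat, 'I_N -> strategy R)
  (hS : forall N, is_sincere PL PH Psig (v N) (Sg N)) :
  (fidelity mu PL PH Psig (Sg N) @[N --> \oo] --> (1 : R)) <->
  (exists eps : nat -> R, (eps @ \oo --> (0 : R)) /\
     forall N, strong_BNE (eps N) mu PL PH Psig (v N) (Sg N)).
Proof.
split.
  move=> hf.
  exists (fun N => 2 * B%:R ^+ 2 * (1 - fidelity mu PL PH Psig (Sg N)))%R; split.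
    by apply: scale_cvg0 => //; apply: mulr_ge0 => //; apply: exprn_ge0.
  by move=> N /=; exact: (dir1_N hpar (hv N) (hS N)).
move=> [eps [heps hBNE]].
apply/cvgrPdist_lt => e e0.
have kap0 := kpar_pos hpar.
set kap := kpar mu aF aC Psig in kap0 *.
have e20 : (0 < e / 2)%R by rewrite divr_gt0.
have he := (cvgrPdist_lt _ _).1 heps (e / 2)%R e20.
near=> N.
have h1 : (`|0 - eps N| < e / 2)%R by near: N; exact: he.
have h2 : (kap^-1 <= N%:R)%R by near: N; exact: nbhs_infty_ger.
have h3 : (B%:R * (e / 2 * kap ^+ 2)^-1 <= N%:R)%R by near: N; exact: nbhs_infty_ger.
have k2 : (0 < e / 2 * kap ^+ 2)%R by rewrite mulr_gt0 // exprn_gt0.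
have c1 : (1 <= kap * N%:R)%R.
  have := ler_wpM2l (ltW kap0) h2; rewrite mulfV ?gt_eqF //.
have c2 : (B%:R <= e / 2 * (kap ^+ 2 * N%:R))%R.
  have e1 : (e / 2 * kap ^+ 2 * (B%:R * (e / 2 * kap ^+ 2)^-1) = B%:R)%R.
    by rewrite mulrCA mulfV ?gt_eqF // mulr1.
  have := ler_wpM2l (ltW k2) h3; rewrite e1 => h.
  by rewrite mulrA.
have c3 : (eps N < e / 2)%R by move: h1; rewrite sub0r normrN; apply: le_lt_trans; exact: ler_norm.
have := @dir2_N R mu PL PH Psig aF aU aC B hpar N (v N) (hv N) (Sg N) (hS N) e (eps N) e0 c3 c1 c2 (hBNE N).
have := @fid_le1 R mu PL PH Psig aF aU aC N (Sg N) hpar (sincere_strat (hS N)).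
move=> f1 f2; rewrite ger0_norm; [exact: f2|lra].
Unshelve. all: by end_near.
Qed.
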